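(* Let $\gamma$ be a three-mode CM satisfying $\gamma-i\tilde J_x\ge0$ for all $x\in\{0,A,B,C\}$. Then $\gamma$ is an edge CM if and only if $\gamma$ is not of the form $\gamma_A\oplus\gamma_B\oplus\gamma_C$ for one-mode CMs $\gamma_A,\gamma_B,\gamma_C$, and $K(\gamma)=\mathbb{R}^6$.
   Context: Conventions: Three modes $A,B,C$, phase-space vectors ordered mode-wise as $(q_A,p_A,q_B,p_B,q_C,p_C)$. $J_1=\begin{pmatrix}0&-1\\1&0\end{pmatrix}$, $J=J_1\oplus J_1\oplus J_1$. A CM of $n$ modes is a real symmetric $2n\times2n$ matrix $\gamma>0$ with $\gamma-iJ\ge0$. $X\ge Y$ means $X-Y$ is positive semidefinite. For $x\in\{A,B,C\}$, $\tilde J_x$ is $J$ with the $2\times2$ diagonal block of mode $x$ replaced by $-J_1$, and $\tilde J_0=J$. A three-mode CM is fully separable if there exist one-mode CMs $\gamma_A,\gamma_B,\gamma_C$ with $\gamma\ge\gamma_A\oplus\gamma_B\oplus\gamma_C$. Edge CM: a three-mode CM $\gamma$ that is not fully separable, satisfies $\gamma-i\tilde J_x\ge0$ for all $x\in\{0,A,B,C\}$, and such that for every real symmetric matrix $P\ge0$, $P\ne0$, the matrix $\gamma-P$ violates $\gamma-P-i\tilde J_x\ge0$ for some $x\in\{0,A,B,C\}$. $K(\gamma)\subseteq\mathbb{R}^6$: let $V\subseteq\mathbb{C}^6$ be the complex span of $\bigcup_{x\in\{0,A,B,C\}}\ker(\gamma-i\tilde J_x)$; $K(\gamma)$ is the real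 linear span of the real parts and imaginary parts of all vectors in $V$. *)

(* Defs.v *)
From HB Require Import structures.
From mathcomp Require Import all_boot all_order all_algebra.
From mathcomp Require Import reals.
From mathcomp Require Import complex.
Set Implicit Arguments. Unset Strict Implicit. Unset Printing Implicit Defensive.
Import Order.TTheory GRing.Theory Num.Theory.
Local Open Scope ring_scope.

Section Defs.
Variable R : realType.
Local Notation C := (R[i]).

Definition cmx (m n : nat) (A : 'M[R]_(m, n)) : 'M[C]_(m, n) :=
  map_mx (fun x : R => (x%:C)%C) A.

Definition iC : C := Complex 0 1.

Definition adj_c (m n : nat) (A : 'M[C]_(m, n)) : 'M[C]_(n, m) :=
  (map_mx (@conjc R) A)^T.

Definition psd_r (n : nat) (M : 'M[R]_n) : Prop :=
  forall v : 'cV[R]_n, 0 <= (v^T *m M *m v) 0 0.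

Definition pd_r (n : nat) (M : 'M[R]_n) : Prop :=
  forall v : 'cV[R]_n, v != 0 -> 0 < (v^T *m M *m v) 0 0.

(* complex positive semidefinite: v^dagger M v is real and >= 0 for every
   complex v (in the order of the numeric field R[i], 0 <= z means z is a
   nonnegative real) *)
Definition psd_c (n : nat) (M : 'M[C]_n) : Prop :=
  forall v : 'cV[C]_n, 0 <= (adj_c v *m M *m v) 0 0.

Definition mx_ge (n : nat) (X Y : 'M[R]_n) : Prop := psd_r (X - Y).

Definition dsum3 (A B D : 'M[R]_2) : 'M[R]_6 :=
  block_mx A 0 0 (block_mx B 0 0 D).

Definition J1 : 'M[R]_2 := \matrix_(i < 2, j < 2)
  (if (i == 0%N :> nat) && (j == 1%N :> nat) then -1
   else if (i == 1%N :> nat) && (j == 0%N :> nat) then 1 else 0).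

Definition Jsympl (n : nat) : 'M[R]_n.*2 :=
  \matrix_(i < n.*2, j < n.*2)
   (if (i./2 == j./2)%N then J1 (inord (odd i)) (inord (odd j)) else 0).

Definition is_CM (n : nat) (g : 'M[R]_n.*2) : Prop :=
  g^T = g /\ pd_r g /\ psd_c (cmx g - iC *: cmx (Jsympl n)).

Definition J3 : 'M[R]_6 := dsum3 J1 J1 J1.

Inductive idx := I0 | IA | IB | IC.

Definition Jt (x : idx) : 'M[R]_6 :=
  match x with
  | I0 => dsum3 J1 J1 J1
  | IA => dsum3 (- J1) J1 J1
  | IB => dsum3 J1 (- J1) J1
  | IC => dsum3 J1 J1 (- J1)
  end.

Definition ptc_cond (g : 'M[R]_6) (x : idx) : Prop :=
  psd_c (cmx g - iC *: cmx (Jt x)).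

Definition fully_separable (g : 'M[R]_6) : Prop :=
  exists gA gB gC : 'M[R]_(1%N.*2),
    [/\ is_CM gA, is_CM gB, is_CM gC & mx_ge g (dsum3 gA gB gC)].

Definition edge_CM (g : 'M[R]_6) : Prop :=
  [/\ @is_CM 3 g, ~ fully_separable g, (forall x, ptc_cond g x) &
      forall P : 'M[R]_6, P^T = P -> psd_r P -> P != 0 ->
        exists x, ~ ptc_cond (g - P) x].

(* V: complex span of the union of the kernels ker(g - i Jt x), as a row
   space (mxalgebra); a column vector v lies in ker M iff the row vector
   v^T lies in kermx M^T. *)
Definition Vspace (g : 'M[R]_6) : 'M[C]_6 :=
  (kermx (cmx g - iC *: cmx (Jt I0))^T + kermx (cmx g - iC *: cmx (Jt IA))^T
   + kermx (cmx g - iC *: cmx (Jt IB))^T + kermx (cmx g - iC *: cmx (Jt IC))^T)%MS.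

Definition in_V (g : 'M[R]_6) (v : 'cV[C]_6) : Prop := (v^T <= Vspace g)%MS.

Definition in_K (g : 'M[R]_6) (w : 'cV[R]_6) : Prop :=
  exists (k : nat) (u : 'I_k -> 'cV[C]_6) (a b : 'I_k -> R),
    (forall j, in_V g (u j)) /\
    w = \sum_(j < k) (a j *: map_mx (fun z : C => complex.Re z) (u j) + b j *: map_mx (fun z : C => complex.Im z) (u j)).

Definition K_full (g : 'M[R]_6) : Prop := forall w : 'cV[R]_6, in_K g w.

End Defs.

(* Main.v *)
Require Import Defs.
From HB Require Import structures.
From mathcomp Require Import all_boot all_order all_algebra.
From mathcomp Require Import reals complex ring lra.
From Stdlib Require Classical_Prop.
Set Implicit Arguments. Unset Strict Implicit. Unset Printing Implicit Defensive.
Import Order.TTheory GRing.Theory Num.Theory.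
Local Open Scope ring_scope.
Local Open Scope complex_scope.

Section S.
Variable R : realType.
Local Notation C := (R[i]).

Definition cjm m n (A : 'M[C]_(m,n)) := map_mx (@conjc R) A.

Lemma cmxD m n (A B : 'M[R]_(m,n)) : cmx (A + B) = cmx A + cmx B.
Proof. by apply/matrixP=> i j; rewrite !mxE rmorphD. Qed.
Lemma cmxN m n (A : 'M[R]_(m,n)) : cmx (- A) = - cmx A.
Proof. by apply/matrixP=> i j; rewrite !mxE rmorphN. Qed.
Lemma cmxB m n (A B : 'M[R]_(m,n)) : cmx (A - B) = cmx A - cmx B.
Proof. by rewrite cmxD cmxN. Qed.
Lemma cmx0 m n : cmx (0 : 'M[R]_(m,n)) = 0.
Proof. by apply/matrixP=> i j; rewrite !mxE. Qed.
Lemma cmxM m n p (A : 'M[R]_(m,n)) (B : 'M[R]_(n,p)) : cmx (A *m B) = cmx A *m cmx B.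
Proof. apply/matrixP=> i j; rewrite !mxE rmorph_sum; apply: eq_bigr => k _. by rewrite !mxE rmorphM. Qed.
Lemma cmxZ m n a (A : 'M[R]_(m,n)) : cmx (a *: A) = a%:C *: cmx A.
Proof. by apply/matrixP=> i j; rewrite !mxE rmorphM. Qed.
Lemma cmx_tr m n (A : 'M[R]_(m,n)) : cmx A^T = (cmx A)^T.
Proof. by apply/matrixP=> i j; rewrite !mxE. Qed.
Lemma cjm_cmx m n (A : 'M[R]_(m,n)) : cjm (cmx A) = cmx A.
Proof. by apply/matrixP=> i j; rewrite !mxE conjc_real. Qed.
Lemma cjmM m n p (A : 'M[C]_(m,n)) (B : 'M[C]_(n,p)) : cjm (A *m B) = cjm A *m cjm B.
Proof. by rewrite /cjm map_mxM. Qed.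
Lemma cjmK m n (A : 'M[C]_(m,n)) : cjm (cjm A) = A.
Proof. by apply/matrixP=> i j; rewrite !mxE conjcK. Qed.
Lemma adj_cE m n (A : 'M[C]_(m,n)) : adj_c A = (cjm A)^T.
Proof. by []. Qed.
Lemma adj_cM m n p (A : 'M[C]_(m,n)) (B : 'M[C]_(n,p)) : adj_c (A *m B) = adj_c B *m adj_c A.
Proof. by rewrite /adj_c map_mxM trmx_mul. Qed.
Lemma adj_cK m n (A : 'M[C]_(m,n)) : adj_c (adj_c A) = A.
Proof. by apply/matrixP=> i j; rewrite !mxE conjcK. Qed.
Lemma adj_cD m n (A B : 'M[C]_(m,n)) : adj_c (A + B) = adj_c A + adj_c B.
Proof. by apply/matrixP=> i j; rewrite !mxE rmorphD. Qed.
Lemma adj_cN m n (A : 'M[C]_(m,n)) : adj_c (- A) = - adj_c A.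
Proof. by apply/matrixP=> i j; rewrite !mxE rmorphN. Qed.
Lemma adj_cZ m n a (A : 'M[C]_(m,n)) : adj_c (a *: A) = a^*%C *: adj_c A.
Proof. by apply/matrixP=> i j; rewrite !mxE rmorphM. Qed.
Lemma adj_c_cmx m n (A : 'M[R]_(m,n)) : adj_c (cmx A) = cmx A^T.
Proof. by apply/matrixP=> i j; rewrite !mxE conjc_real. Qed.

Lemma conj_iC : (iC R)^*%C = - iC R.
Proof. by apply/eqP; rewrite eq_complex /= oppr0 !eqxx. Qed.

Lemma J1_tr : (J1 R)^T = - J1 R.
Proof.
apply/matrixP=> i j; rewrite !mxE.
case: i => [[|[|i]] Hi] //; case: j => [[|[|j]] Hj] //=; rewrite ?oppr0 ?opprK //.
Qed.

Lemma dsum3_tr (a b c : 'M[R]_2) : (dsum3 a b c)^T = dsum3 a^T b^T c^T.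
Proof.
rewrite /dsum3; set T := (X in X^T).
have -> : T^T = (T : 'M_(2 + (2 + 2)))^T by [].
by rewrite /T !tr_block_mx !trmx0.
Qed.

Lemma dsum3N (a b c : 'M[R]_2) : - dsum3 a b c = dsum3 (-a) (-b) (-c).
Proof.
rewrite /dsum3; set T := block_mx a _ _ _.
have -> : - T = - (T : 'M_(2 + (2 + 2))) by [].
by rewrite /T !opp_block_mx !oppr0.
Qed.

Lemma Jt_tr x : (Jt R x)^T = - Jt R x.
Proof. by case: x; rewrite /= dsum3_tr dsum3N ?raddfN /= ?J1_tr ?opprK. Qed.

Definition Hm (g : 'M[R]_6) x := cmx g - iC R *: cmx (Jt R x).

Lemma Hm_adj g x : g^T = g -> adj_c (Hm g x) = Hm g x.
Proof.
move=> gs; rewrite /Hm adj_cD adj_cN adj_cZ !adj_c_cmx gs Jt_tr conj_iC cmxN.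
by rewrite scaleNr scalerN opprK.
Qed.

Lemma Hm_tr g x : g^T = g -> (Hm g x)^T = cjm (Hm g x).
Proof. by move=> gs; rewrite -{1}(Hm_adj x gs) adj_cE trmxK. Qed.

Lemma ge0_real (z : C) : 0 <= z -> z = (complex.Re z)%:C /\ 0 <= complex.Re z.
Proof. case: z => x y; rewrite lecE /= => /andP[/eqP -> ->]; done. Qed.

Definition form n (M : 'M[C]_n) (u v : 'cV[C]_n) : C := (adj_c u *m M *m v) 0 0.

Lemma adj_c11 (X : 'M[C]_1) : adj_c X 0 0 = (X 0 0)^*%C.
Proof. by rewrite !mxE. Qed.

Lemma form_conj n (M : 'M[C]_n) u v : adj_c M = M -> form M v u = (form M u v)^*%C.
Proof.
move=> hM; rewrite /form -adj_c11 !adj_cM adj_cK hM.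
by rewrite mulmxA.
Qed.

Lemma formDr n (M : 'M[C]_n) u v w : form M u (v + w) = form M u v + form M u w.
Proof. by rewrite /form mulmxDr mxE. Qed.
Lemma formDl n (M : 'M[C]_n) u v w : form M (u + v) w = form M u w + form M v w.
Proof. by rewrite /form adj_cD !mulmxDl mxE. Qed.
Lemma formNr n (M : 'M[C]_n) u v : form M u (- v) = - form M u v.
Proof. by rewrite /form mulmxN mxE. Qed.
Lemma formNl n (M : 'M[C]_n) u v : form M (- u) v = - form M u v.
Proof. by rewrite /form adj_cN !mulNmx mxE. Qed.
Lemma formZr n (M : 'M[C]_n) u c v : form M u (c *: v) = c * form M u v.
Proof. by rewrite /form -scalemxAr mxE. Qed.
Lemma formZl n (M : 'M[C]_n) c u v : form M (c *: u) v = c^*%C * form M u v.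
Proof. by rewrite /form adj_cZ -!scalemxAl mxE. Qed.
Lemma formDm n (M N : 'M[C]_n) u v : form (M + N) u v = form M u v + form N u v.
Proof. by rewrite /form mulmxDr mulmxDl mxE. Qed.
Lemma formNm n (M : 'M[C]_n) u v : form (- M) u v = - form M u v.
Proof. by rewrite /form mulmxN mulNmx mxE. Qed.

Lemma psd_form n (M : 'M[C]_n) v : psd_c M -> 0 <= form M v v.
Proof. by move=> h; apply: h. Qed.

Lemma conj_divR (b : C) (t : R) : (b / t%:C)^*%C = b^*%C / t%:C.
Proof. rewrite rmorphM fmorphV; congr (_ * _^-1); exact: conjc_real. Qed.

Lemma CS n (M : 'M[C]_n) u v : adj_c M = M -> psd_c M ->
  form M u v * (form M u v)^*%C <= (form M u u + 1) * form M v v.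
Proof.
move=> hM psd.
have [ea a0] := ge0_real (psd_form u psd); have [eF F0] := ge0_real (psd_form v psd).
set b := form M u v in ea eF *.
have [eN N0] := ge0_real (mulcJ_ge0 b).
set a' := complex.Re (form M u u) in ea a0 *.
set F' := complex.Re (form M v v) in eF F0 *.
set N' := complex.Re (b * b^*%C) in eN N0 *.
have ha : (a' + 1 != 0) by rewrite gt_eqF // ltr_pwDr.
set c := b / (a' + 1)%:C.
have := psd_form (v - c *: u) psd.
rewrite formDl !formDr !formNl !formNr !formZl !formZr (form_conj u v hM).
rewrite -/b ea eF /c.
set t := a' + 1.
have t0 : 0 < t by rewrite ltr_pwDr.
rewrite conj_divR.
have tC : t%:C != 0 by rewrite fmorph_eq0 gt_eqF.
have E : forall T : C, T != 0 -> F'%:C - b / T * b^*%C + (- (b^*%C / T * b) - - (b^*%C / T * (b / T * a'%:C)))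
   = F'%:C - 2%:R * (b * b^*%C) / T + (b * b^*%C) * a'%:C / T ^+ 2.
  by move=> T hT; field.
rewrite E // => H.
have eN' : b * b^*%C = N'%:C := eN.
have H1 : 0 <= (F' - 2 * N' / t + N' * a' / t ^+ 2)%:C.
  apply: (le_trans H); rewrite le_eqVlt; apply/orP; left; apply/eqP.
  rewrite eN' !(rmorphD, rmorphB, rmorphM, fmorphV, rmorphXn, rmorph_nat, rmorphN) -/t.
  rewrite rmorph1; field; by move: tC; rewrite /t rmorphD rmorph1.
rewrite ler0c in H1.
have -> : (a'%:C + 1) * F'%:C = ((a' + 1) * F')%:C by rewrite rmorphM rmorphD rmorph1.
rewrite eN' lecR.
clear H; rename H1 into H.
have H2 : 0 <= F' * t ^+ 2 - 2 * N' * t + N' * a'.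
  have := mulr_ge0 H (sqr_ge0 t).
  have tn : t != 0 by rewrite gt_eqF.
  suff -> : (F' - 2 * N' / t + N' * a' / t ^+ 2) * t ^+ 2 = F' * t ^+ 2 - 2 * N' * t + N' * a' by [].
  by field.
rewrite -/t; have ea' : a' = t - 1 by rewrite /t addrK.
rewrite ea' in H2.
nra.
Qed.

Lemma cjm_tr m n (A : 'M[C]_(m,n)) : cjm A^T = (cjm A)^T.
Proof. by apply/matrixP=> i j; rewrite !mxE. Qed.
Lemma cjm0 m n : cjm (0 : 'M[C]_(m,n)) = 0.
Proof. by apply/matrixP=> i j; rewrite !mxE rmorph0. Qed.

Lemma range_lemma n (H : 'M[C]_n) (w : 'cV[R]_n) : adj_c H = H ->
  kermx H^T *m cmx w = 0 -> exists u, cmx w = H *m u.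
Proof.
move=> hH hk.
have HT : H^T = cjm H by rewrite -{1}hH adj_cE trmxK.
suff : ((cmx w)^T <= H^T)%MS.
  by case/submxP=> D eD; exists D^T; rewrite -[cmx w]trmxK eD trmx_mul trmxK.
rewrite submxE; set Q := cokermx H^T.
have h1 : (cjm Q)^T *m H^T = 0.
  rewrite HT -cjm_tr -cjmM -[Q^T *m H]trmxK trmx_mul trmxK mulmx_coker.
  by rewrite trmx0 cjm0.
have /submxP [D eD] : ((cjm Q)^T <= kermx H^T)%MS by apply/sub_kermxP.
have h2 : (cjm Q)^T *m cmx w = 0 by rewrite eD -mulmxA hk mulmx0.
have : cjm ((cjm Q)^T *m cmx w)^T = 0 by rewrite h2 trmx0 cjm0.
by rewrite trmx_mul cjmM trmxK cjmK cjm_tr cjm_cmx => ->.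
Qed.

Lemma perturb n (H : 'M[C]_n) (w : 'cV[R]_n) u (eps : R) : adj_c H = H -> psd_c H ->
  cmx w = H *m u -> 0 <= eps -> eps%:C * (form H u u + 1) <= 1 ->
  psd_c (H - cmx (eps *: (w *m w^T))).
Proof.
move=> hH psd ew e0 he v.
rewrite -/(form _ v v) formDm formNm cmxZ cmxM.
have -> : form (eps%:C *: (cmx w *m cmx w^T)) v v = eps%:C * ((form H v u) * (form H u v)).
  rewrite -adj_c_cmx ew adj_cM hH /form -scalemxAr -scalemxAl mxE; congr (_ * _).
  have -> : adj_c v *m (H *m u *m (adj_c u *m H)) *m v =
     (adj_c v *m H *m u) *m (adj_c u *m H *m v) by rewrite !mulmxA.
  by rewrite mxE big_ord1.
rewrite (form_conj u v hH).
set b := form H u v.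
have := CS u v hH psd; rewrite -/b.
have [ea a0] := ge0_real (psd_form u psd); have [eF F0] := ge0_real (psd_form v psd).
have [eN N0] := ge0_real (mulcJ_ge0 b).
set a' := complex.Re (form H u u) in ea a0 *.
set F' := complex.Re (form H v v) in eF F0 *.
set N' := complex.Re (b * b^*%C) in eN N0 *.
rewrite ea eF in he * => hcs.
have eN' : b^*%C * b = N'%:C by rewrite mulrC.
rewrite eN'.
have -> : F'%:C - eps%:C * N'%:C = (F' - eps * N')%:C by rewrite rmorphB rmorphM.
rewrite ler0c.
have h1 : N' <= (a' + 1) * F'.
  by move: hcs; rewrite eN -(rmorph1 (real_complex R)) -rmorphD -rmorphM lecR.
have h2 : eps * (a' + 1) <= 1.
  by move: he; rewrite -(rmorph1 (real_complex R)) -rmorphD -rmorphM lecR.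
nra.
Qed.

Definition Rem m n (A : 'M[C]_(m,n)) : 'M[R]_(m,n) := map_mx (fun z : C => complex.Re z) A.
Definition Imm m n (A : 'M[C]_(m,n)) : 'M[R]_(m,n) := map_mx (fun z : C => complex.Im z) A.

Lemma ReIm_decomp m n (A : 'M[C]_(m,n)) : A = cmx (Rem A) + iC R *: cmx (Imm A).
Proof.
apply/matrixP=> i j; rewrite !mxE; case: (A i j) => a b.
by apply/eqP; rewrite eq_complex /= !mul0r !mul1r subrr addr0 !add0r !eqxx.
Qed.

Lemma form_cmx n (P : 'M[R]_n) (x y : 'cV[R]_n) :
  form (cmx P) (cmx x) (cmx y) = ((x^T *m P *m y) 0 0)%:C.
Proof. by rewrite /form adj_c_cmx -!cmxM mxE. Qed.

Lemma form_sym n (P : 'M[R]_n) (x y : 'cV[R]_n) : P^T = P ->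
  (x^T *m P *m y) 0 0 = (y^T *m P *m x) 0 0.
Proof.
move=> hP; transitivity ((x^T *m P *m y)^T 0 0); first by rewrite [RHS]mxE.
by rewrite !trmx_mul trmxK hP mulmxA.
Qed.

Lemma psd_cmx n (P : 'M[R]_n) : P^T = P -> psd_r P -> psd_c (cmx P).
Proof.
move=> hP psd v; rewrite -/(form _ v v) (ReIm_decomp v).
set x := Rem v; set y := Imm v.
rewrite !(formDl, formDr, formZl, formZr) !form_cmx conj_iC (form_sym y x hP).
have -> : ((x^T *m P *m x) 0 0)%:C + iC R * ((x^T *m P *m y) 0 0)%:C +
  (- iC R * ((x^T *m P *m y) 0 0)%:C + - iC R * (iC R * ((y^T *m P *m y) 0 0)%:C))
  = ((x^T *m P *m x) 0 0 + (y^T *m P *m y) 0 0)%:C.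
  rewrite rmorphD /=.
  have -> : - iC R * (iC R * ((y^T *m P *m y) 0 0)%:C) = ((y^T *m P *m y) 0 0)%:C.
    rewrite mulNr mulrA -expr2.
    have -> : iC R ^+ 2 = -1 by apply/eqP; rewrite expr2 eq_complex /= !mul0r !mul1r ?mulr0 ?addr0 ?oppr0 ?sub0r ?eqxx.
    by rewrite mulNr mul1r opprK.
  by rewrite mulNr addrA addrK.
by rewrite ler0c addr_ge0 // psd.
Qed.

Lemma kill_vec n (P : 'M[R]_n) (M : 'M[C]_n) (v : 'cV[C]_n) : P^T = P -> psd_r P ->
  psd_c (M - cmx P) -> M *m v = 0 -> cmx P *m v = 0.
Proof.
move=> hP psd hM hv.
have hpc := psd_cmx hP psd.
have hadj : adj_c (cmx P) = cmx P by rewrite adj_c_cmx hP.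
have f0 : form M v v = 0 by rewrite /form -mulmxA hv mulmx0 mxE.
have fP : form (cmx P) v v = 0.
  move: f0; rewrite -(subrK (cmx P) M) formDm addrC.
  move/eqP; rewrite paddr_eq0 ?psd_form // => /andP[/eqP -> _] //.
apply/matrixP=> i j; rewrite (ord1 j) [RHS]mxE.
have := CS (delta_mx i 0) v hadj hpc; rewrite fP mulr0.
set b := form _ _ _ => hb.
have : b * b^*%C == 0 by rewrite eq_le hb mulcJ_ge0.
rewrite mulf_eq0 conjc_eq0 orbb /b /form.
have -> : adj_c (delta_mx i 0 : 'cV[C]_n) = delta_mx 0 i.
  by apply/matrixP=> k l; rewrite !mxE rmorph_nat andbC.
by rewrite -mulmxA -rowE mxE => /eqP.
Qed.

Lemma Rem_dec m n (a b : 'M[R]_(m,n)) : Rem (cmx a + iC R *: cmx b) = a.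
Proof. by apply/matrixP=> i j; rewrite !mxE /= !mul0r !mul1r subrr addr0. Qed.
Lemma Imm_dec m n (a b : 'M[R]_(m,n)) : Imm (cmx a + iC R *: cmx b) = b.
Proof. by apply/matrixP=> i j; rewrite !mxE /= !mul0r !mul1r !add0r. Qed.

Lemma killP (g P : 'M[R]_6) : P^T = P -> psd_r P -> K_full g ->
  (forall x, psd_c (Hm g x - cmx P)) -> P = 0.
Proof.
move=> hP psd hK hx.
have h1 : forall x, (kermx (Hm g x)^T <= kermx (cmx P)^T)%MS.
  move=> x; apply/sub_kermxP/row_matrixP => i; rewrite row_mul row0.
  have /sub_kermxP hr : (row i (kermx (Hm g x)^T) <= kermx (Hm g x)^T)%MS by apply: row_sub.
  have hv : Hm g x *m (row i (kermx (Hm g x)^T))^T = 0 by move/(congr1 trmx): hr; rewrite trmx_mul trmxK trmx0.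
  have := kill_vec hP psd (hx x) hv.
  by move/(congr1 trmx); rewrite trmx_mul trmxK trmx0.
have hV : (Vspace g <= kermx (cmx P)^T)%MS.
  rewrite /Vspace addsmx_sub; apply/andP; split; last exact: (h1 IC).
  rewrite addsmx_sub; apply/andP; split; last exact: (h1 IB).
  rewrite addsmx_sub; apply/andP; split; [exact: (h1 I0)| exact: (h1 IA)].
have hu : forall u, in_V g u -> P *m Rem u = 0 /\ P *m Imm u = 0.
  move=> u hin; have /sub_kermxP hu : ((u^T) <= kermx (cmx P)^T)%MS by apply: submx_trans hV.
  have : cmx P *m u = 0 by move/(congr1 trmx): hu; rewrite trmx_mul !trmxK trmx0.
  rewrite {1}(ReIm_decomp u) mulmxDr -scalemxAr -!cmxM => e.
  by split; [rewrite -(Rem_dec (P *m Rem u) (P *m Imm u)) e | rewrite -(Imm_dec (P *m Rem u) (P *m Imm u)) e];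
    apply/matrixP=> i j; rewrite !mxE.
have hw : forall w : 'cV[R]_6, P *m w = 0.
  move=> w; have [k [u [a [b [hin ->]]]]] := hK w.
  rewrite mulmx_sumr big1 // => j _.
  have [e1 e2] := hu _ (hin j).
  by rewrite mulmxDr -!scalemxAr -/(Rem _) -/(Imm _) e1 e2 !scaler0 addr0.
apply/matrixP=> i j; have := hw (delta_mx j 0).
by rewrite -colE => /matrixP/(_ i 0); rewrite !mxE.
Qed.

Definition Kmx (g : 'M[R]_6) : 'M[R]_(6 + 6, 6) := col_mx (Rem (Vspace g)) (Imm (Vspace g)).

Lemma rowfull_K g : row_full (Kmx g) -> K_full g.
Proof.
move=> hf w.
have /submxP [D eD] : (w^T <= Kmx g)%MS by apply: submx_full.
set V := Vspace g.
exists 6%N, (fun j => (row j V)^T), (fun j => lsubmx D 0 j), (fun j => rsubmx D 0 j).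
split.
  by move=> j; rewrite /in_V trmxK; apply: row_sub.
rewrite -[w]trmxK eD -{1}[D]hsubmxK mul_row_col.
apply/matrixP => i k; rewrite (ord1 k) summxE !mxE -big_split /=.
apply: eq_bigr => j _; by rewrite !mxE.
Qed.

Lemma notK_w g : ~ K_full g ->
  exists w : 'cV[R]_6, w != 0 /\ forall x, kermx (Hm g x)^T *m cmx w = 0.
Proof.
move=> nK.
have nf : ~~ row_full (Kmx g) by apply/negP => /rowfull_K.
have : cokermx (Kmx g) != 0 by rewrite cokermx_eq0.
set Q := cokermx (Kmx g) => hQ.
have [j hj] : exists j, col j Q != 0.
  case: (pickP (fun j => col j Q != 0)) => [j hj | h]; first by exists j.
  case/eqP: hQ; apply/matrixP => i j; move/eqP: (negbFE (h j)) => /matrixP/(_ i 0).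
  by rewrite !mxE.
exists (col j Q); split => // x.
have hK : Kmx g *m col j Q = 0 by rewrite colE mulmxA mulmx_coker mul0mx.
move: hK; rewrite /Kmx mul_col_mx => /eqP; rewrite col_mx_eq0 => /andP[/eqP h1 /eqP h2].
set V := Vspace g.
have hV : V *m cmx (col j Q) = 0.
  by rewrite {1}(ReIm_decomp V) mulmxDl -scalemxAl -!cmxM h1 h2 cmx0 scaler0 addr0.
have sub : (kermx (Hm g x)^T <= V)%MS.
  rewrite /V /Vspace; case: x.
  - apply: submx_trans (addsmxSl _ _); apply: submx_trans (addsmxSl _ _); exact: addsmxSl.
  - apply: submx_trans (addsmxSl _ _); apply: submx_trans (addsmxSl _ _); exact: addsmxSr.
  - apply: submx_trans (addsmxSl _ _); exact: addsmxSr.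
  - exact: addsmxSr.
by case/submxP: sub => D ->; rewrite -mulmxA hV mulmx0.
Qed.

Lemma edge_K g : g^T = g -> (forall x, ptc_cond g x) ->
  (forall P : 'M[R]_6, P^T = P -> psd_r P -> P != 0 -> exists x, ~ ptc_cond (g - P) x) ->
  K_full g.
Proof.
move=> gs hptc hedge.
case: (Classical_Prop.classic (K_full g)) => // nK.
have [w [w0 hw]] := notK_w nK.
have hu : forall x, exists u, cmx w = Hm g x *m u := fun x => range_lemma (Hm_adj x gs) (hw x).
have [uf huf] : exists uf : idx -> 'cV[C]_6, forall x, cmx w = Hm g x *m uf x.
  have [u0 h0] := hu I0; have [u1 h1] := hu IA; have [u2 h2] := hu IB; have [u3 h3] := hu IC.
  by exists (fun x => match x with I0 => u0 | IA => u1 | IB => u2 | IC => u3 end); case.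
have hpsd : forall x, psd_c (Hm g x) := hptc.
pose a x := complex.Re (form (Hm g x) (uf x) (uf x)).
have ea : forall x, form (Hm g x) (uf x) (uf x) = (a x)%:C /\ 0 <= a x.
  by move=> x; apply: ge0_real; apply: psd_form.
pose S := a I0 + a IA + a IB + a IC.
have S0 : forall x, 0 <= a x <= S.
  have [_ h0] := ea I0; have [_ h1] := ea IA; have [_ h2] := ea IB; have [_ h3] := ea IC.
  rewrite /S; case; apply/andP; split => //; lra.
have S0' : 0 <= S by have := S0 I0; case/andP => ? ?; lra.
pose eps := (1 + S)^-1.
have e0 : 0 < eps by rewrite invr_gt0; lra.
pose P := eps *: (w *m w^T).
have hPT : P^T = P by rewrite /P linearZ /= trmx_mul trmxK.
have hPpsd : psd_r P.
  move=> v; rewrite /P -scalemxAr -scalemxAl mxE; apply: mulr_ge0; first lra.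
  have -> : v^T *m (w *m w^T) *m v = (v^T *m w) *m (w^T *m v) by rewrite !mulmxA.
  rewrite mxE big_ord1.
  have -> : (w^T *m v) 0 0 = (v^T *m w) 0 0.
    by transitivity ((v^T *m w)^T 0 0); [rewrite trmx_mul trmxK | rewrite mxE].
  by rewrite -expr2 sqr_ge0.
have hP0 : P != 0.
  have [i hi] : exists i, w i 0 != 0.
    case: (pickP (fun i => w i 0 != 0)) => [i hi|h]; first by exists i.
    case/eqP: w0; apply/matrixP => i j; rewrite (ord1 j) mxE; exact/eqP/negbFE/h.
  apply/eqP => /matrixP/(_ i i); rewrite !mxE big_ord1 !mxE => /eqP.
  by rewrite !mulf_eq0 (negbTE hi) gt_eqF.
have [x nx] := hedge P hPT hPpsd hP0.
exfalso; apply: nx; rewrite /ptc_cond cmxB addrAC -/(Hm g x).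
apply: (perturb (Hm_adj x gs) (hpsd x) (huf x)); first lra.
have [-> _] := ea x.
rewrite -(rmorph1 (real_complex R)) -rmorphD -rmorphM lecR.
have := S0 x; case/andP => h1 h2.
rewrite /eps ler_pdivrMl; last lra.
lra.
Qed.

Lemma psd_tr n (M : 'M[C]_n) : psd_c M -> psd_c M^T.
Proof.
move=> h v; have := h (cjm v); rewrite -/(form _ _ _) -/(form _ v v).
suff -> : form M (cjm v) (cjm v) = form M^T v v by [].
rewrite /form adj_cE cjmK; transitivity ((v^T *m M *m cjm v)^T 0 0); first by rewrite [RHS]mxE.
by rewrite !trmx_mul trmxK mulmxA.
Qed.

Lemma psd_block m n (A : 'M[C]_m) (B : 'M[C]_n) : psd_c A -> psd_c B ->
  psd_c (block_mx A 0 0 B).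
Proof.
move=> hA hB v; rewrite -[v]vsubmxK.
have -> : adj_c (col_mx (usubmx v) (dsubmx v)) = row_mx (adj_c (usubmx v)) (adj_c (dsubmx v)).
  by rewrite /adj_c map_col_mx tr_col_mx.
rewrite mul_row_block !mulmx0 addr0 add0r mul_row_col mxE.
by apply: addr_ge0; [apply: hA | apply: hB].
Qed.

Lemma Jsympl1 : Jsympl R 1 = J1 R.
Proof.
apply/matrixP=> i j; rewrite !mxE.
case: i => [[|[|i]] Hi] //; case: j => [[|[|j]] Hj] //=; by rewrite !inordK.
Qed.

End S.

Section S.
Variable R : realType.
Local Notation C := (R[i]).

Lemma cmx_block m1 m2 n1 n2 (A : 'M[R]_(m1,n1)) (B : 'M[R]_(m1,n2)) (Cm : 'M[R]_(m2,n1)) (D : 'M[R]_(m2,n2)) :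
  cmx (block_mx A B Cm D) = block_mx (cmx A) (cmx B) (cmx Cm) (cmx D).
Proof. exact: map_block_mx. Qed.

Lemma blk_lin m n (A A' : 'M[R]_m) (B B' : 'M[R]_n) :
  cmx (block_mx A 0 0 B) - iC R *: cmx (block_mx A' 0 0 B') =
  block_mx (cmx A - iC R *: cmx A') 0 0 (cmx B - iC R *: cmx B').
Proof.
by rewrite !cmx_block !cmx0 scale_block_mx opp_block_mx add_block_mx !scaler0 !oppr0 !addr0.
Qed.

Lemma Hm_dsum a b c a' b' c' :
  cmx (dsum3 a b c) - iC R *: cmx (dsum3 a' b' c') =
  (block_mx (cmx a - iC R *: cmx a') 0 0
    (block_mx (cmx b - iC R *: cmx b') 0 0 (cmx c - iC R *: cmx c')) : 'M_(2 + (2 + 2))).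
Proof.
pose T1 : 'M[R]_(2+(2+2)) := block_mx a 0 0 (block_mx b 0 0 c).
pose T2 : 'M[R]_(2+(2+2)) := block_mx a' 0 0 (block_mx b' 0 0 c').
change (cmx T1 - iC R *: cmx T2 = (block_mx (cmx a - iC R *: cmx a') 0 0
    (block_mx (cmx b - iC R *: cmx b') 0 0 (cmx c - iC R *: cmx c')) : 'M_(2 + (2 + 2)))).
by rewrite /T1 /T2 blk_lin blk_lin.
Qed.

Lemma CM1_psd (gA : 'M[R]_2) : @is_CM R 1 gA ->
  psd_c (cmx gA - iC R *: cmx (J1 R)) /\ psd_c (cmx gA - iC R *: cmx (- J1 R)).
Proof.
case=> gs [_ h].
have h1 : psd_c (cmx gA - iC R *: cmx (J1 R)) by rewrite -Jsympl1.
split; first exact: h1.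
have e : (cmx gA - iC R *: cmx (J1 R))^T = cmx gA - iC R *: cmx (- J1 R).
  apply/matrixP=> i j; rewrite !mxE.
  have := congr1 (fun M : 'M[R]_2 => M i j) gs; have := congr1 (fun M : 'M[R]_2 => M i j) (@J1_tr R).
  rewrite !mxE /= => -> ->.
  by rewrite rmorphN.
by rewrite -e; apply: psd_tr.
Qed.


Lemma psd_dsum3 (a b c a' b' c' : 'M[R]_2) :
  psd_c (cmx a - iC R *: cmx a') -> psd_c (cmx b - iC R *: cmx b') -> psd_c (cmx c - iC R *: cmx c') ->
  psd_c (cmx (dsum3 a b c) - iC R *: cmx (dsum3 a' b' c')).
Proof.
move=> ha hb hc.
have := psd_block ha (psd_block hb hc).
rewrite -Hm_dsum; exact.
Qed.

Lemma psd_dsum (gA gB gC : 'M[R]_2) x : @is_CM R 1 gA -> @is_CM R 1 gB -> @is_CM R 1 gC ->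
  psd_c (Hm (dsum3 gA gB gC) x).
Proof.
move=> /CM1_psd [a1 a2] /CM1_psd [b1 b2] /CM1_psd [c1 c2].
rewrite /Hm; case: x => /=.
- exact: psd_dsum3 a1 b1 c1.
- exact: psd_dsum3 a2 b1 c1.
- exact: psd_dsum3 a1 b2 c1.
- exact: psd_dsum3 a1 b1 c2.
Qed.
End S.

Unset Implicit Arguments.
Local Close Scope complex_scope.

Theorem theorem4 (R : realType) (g : 'M[R]_6) :
  @is_CM R 3 g -> (forall x : idx, ptc_cond g x) ->
  (edge_CM g <->
   ((~ exists gA gB gC : 'M[R]_(1%N.*2),
         [/\ is_CM gA, is_CM gB, is_CM gC & g = dsum3 gA gB gC])
    /\ K_full g)).
Proof.
move=> hCM hptc; have gs : g^T = g := hCM.1.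
split.
- case=> _ nsep _ hedge; split.
  + case=> gA [gB [gC [hA hB hC e]]]; apply: nsep.
    exists gA, gB, gC; split => //.
    by rewrite -e /mx_ge subrr => v; rewrite mulmx0 mul0mx mxE.
  + exact: edge_K gs hptc hedge.
- case=> nprod hK; split => //.
  + case=> gA [gB [gC [hA hB hC hge]]].
    set D := dsum3 gA gB gC.
    have DT : D^T = D by rewrite /D dsum3_tr hA.1 hB.1 hC.1.
    have hPT : (g - D)^T = g - D by rewrite raddfB /= gs DT.
    have := killP hPT hge hK.
    have hx : forall x, psd_c (Hm g x - cmx (g - D)).
      move=> x; have := psd_dsum x hA hB hC; rewrite -/D.
      have -> : Hm g x - cmx (g - D) = Hm D x.
        by rewrite /Hm cmxB opprB addrC addrA subrK.
      done.
    move/(_ hx)/subr0_eq => e; apply: nprod.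
    by exists gA, gB, gC; split.
  + move=> P hPT hP hP0.
    case: (Classical_Prop.classic (exists x, ~ ptc_cond (g - P) x)) => // hn.
    exfalso; move/eqP: hP0; apply.
    apply: killP hPT hP hK _ => x.
    case: (Classical_Prop.classic (ptc_cond (g - P) x)) => h; last by case: hn; exists x.
    by move: h; rewrite /ptc_cond cmxB addrAC.
Qed.
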